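(* For every real $M>0$ there exist connected graphs $G$ and $H$, with $H$ a subgraph of $G$, such that $$\frac{\dim(H)}{\dim(G)}>M,\qquad \frac{\mathrm{bdim}(H)}{\mathrm{bdim}(G)}>M,\qquad \frac{\mathrm{adim}(H)}{\mathrm{adim}(G)}>M.$$
   Context: $d(x,y)$ denotes graph distance. A set $S\subseteq V(G)$ is a resolving set if for all distinct $x,y$ there is $z\in S$ with $d(x,z)\ne d(y,z)$. $\dim(G)$ is the minimum size of a resolving set. For an integer $k\ge1$ let $d_k(x,y)=\min\{d(x,y),k+1\}$. A set $A\subseteq V(G)$ is an adjacency resolving set if for all distinct $x,y\in V(G)$ there is $z\in A$ with $d_1(x,z)\ne d_1(y,z)$. $\mathrm{adim}(G)$ is the minimum size of an adjacency resolving set. A function $f:V(G)\to\mathbb{Z}_{\ge 0}$ is a resolving broadcast of $G$ if for all distinct $x,y\in V(G)$ there is $z\in V(G)$ with $f(z)=i>0$ and $d_i(x,z)\ne d_i(y,z)$. The broadcast dimension $\mathrm{bdim}(G)$ is the minimum of $\sum_{v\in V(G)}f(v)$ over all resolving broadcasts $f$ of $G$. *)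

(* Defs.v *)
From mathcomp Require Import all_boot.
From mathcomp Require Import boolp.
From Stdlib Require Import Reals.
Set Implicit Arguments. Unset Strict Implicit. Unset Printing Implicit Defensive.

Record graph := Graph {
  vert : finType;
  adj : rel vert;
  adj_sym : symmetric adj;
  adj_irr : irreflexive adj }.

Fixpoint ball (G : graph) (k : nat) (x : vert G) : {set vert G} :=
  match k with
  | 0 => [set x]
  | k'.+1 => ball k' x :|: [set y | [exists z in ball k' x, adj z y]]
  end.

Definition connected (G : graph) : Prop :=
  forall x y : vert G, exists k, y \in ball k x.

(* graph distance (meaningful for connected graphs: least k with y in ball k x) *)
Definition dist (G : graph) (x y : vert G) : nat :=
  match pselect (exists k, y \in ball k x) with
  | left h => ex_minn h
  | right _ => 0
  end.

Definition distk (G : graph) (k : nat) (x y : vert G) : nat := minn (dist x y) k.+1.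

Definition resolving (G : graph) (S : {set vert G}) : Prop :=
  forall x y : vert G, x <> y -> exists2 z, z \in S & dist x z <> dist y z.

Definition adj_resolving (G : graph) (A : {set vert G}) : Prop :=
  forall x y : vert G, x <> y -> exists2 z, z \in A & distk 1 x z <> distk 1 y z.

Definition resolving_broadcast (G : graph) (f : vert G -> nat) : Prop :=
  forall x y : vert G, x <> y ->
    exists z, 0 < f z /\ distk (f z) x z <> distk (f z) y z.

(* minimum of a nonempty (or default 0) Prop-defined set of naturals *)
Definition nat_min (P : nat -> Prop) : nat :=
  match pselect (exists n, P n) with
  | left h => ex_minn (P := fun n => `[< P n >]) (let: ex_intro n hn := h in ex_intro _ n (asboolT hn))
  | right _ => 0
  end.

Definition mdim (G : graph) : nat :=
  nat_min (fun n => exists S : {set vert G}, resolving S /\ #|S| = n).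
Definition adim (G : graph) : nat :=
  nat_min (fun n => exists A : {set vert G}, adj_resolving A /\ #|A| = n).
Definition bdim (G : graph) : nat :=
  nat_min (fun n => exists f : vert G -> nat, resolving_broadcast f /\
                      \sum_(v : vert G) f v = n).

Definition subgraph (H G : graph) : Prop :=
  exists phi : vert H -> vert G, injective phi /\
    forall u v : vert H, adj u v -> adj (phi u) (phi v).

(* Main.v *)
Require Import Defs.
From mathcomp Require Import all_boot.
From mathcomp Require Import boolp.
From mathcomp Require Import zify.
From Stdlib Require Import Reals Lra.
Import Defs.
Set Implicit Arguments. Unset Strict Implicit.

Lemma ball_mono (G : graph) (x : vert G) i j : i <= j -> ball i x \subset ball j x.
Proof.
move=> /subnK <-; elim: (j - i) => [|d IH] //=.
apply: subset_trans IH _; exact: subsetUl.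
Qed.

Lemma distP (G : graph) (cG : connected G) (x z : vert G) k :
  (dist x z <= k) = (z \in ball k x).
Proof.
rewrite /dist; case: pselect => [h|h]; last by case: h; exact: cG.
case: ex_minnP => m Hm Hmin.
apply/idP/idP => [le|Hk].
  have := subsetP (ball_mono x le) _ Hm. done.
exact: Hmin.
Qed.

Lemma ball1 (G : graph) (x z : vert G) : (z \in ball 1 x) = (z == x) || adj x z.
Proof.
rewrite /= !inE; congr (_ || _).
apply/existsP/idP => [[w /andP [/set1P -> //]]|h].
by exists x; rewrite set11 h.
Qed.

Lemma dist_eq_ball (G : graph) (cG : connected G) (x x' z z' : vert G) :
  (forall k, (z \in ball k x) = (z' \in ball k x')) -> dist x z = dist x' z'.
Proof.
move=> h; apply/anti_leq/andP; split.
  by rewrite (distP cG) h -(distP cG).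
by rewrite (distP cG) -h -(distP cG).
Qed.

Lemma ball_auto (G : graph) (s : vert G -> vert G) : involutive s ->
  (forall a b, adj (s a) (s b) = adj a b) ->
  forall k x z, (s z \in ball k (s x)) = (z \in ball k x).
Proof.
move=> sK sA; elim=> [|k IH] x z /=.
  by rewrite !in_set1 (inj_eq (inv_inj sK)).
rewrite !inE IH; congr (_ || _).
apply/existsP/existsP => [[w /andP [Hw Ha]]|[w /andP [Hw Ha]]].
  by exists (s w); rewrite -IH sK Hw /= -(sA (s w) z) sK Ha.
by exists (s w); rewrite IH Hw sA Ha.
Qed.

Lemma dist_auto (G : graph) (cG : connected G) (s : vert G -> vert G) :
  involutive s -> (forall a b, adj (s a) (s b) = adj a b) ->
  forall x z, dist (s x) (s z) = dist x z.
Proof. by move=> sK sA x z; apply: dist_eq_ball => // k; apply: ball_auto. Qed.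

Lemma distk1 (G : graph) (cG : connected G) (x z : vert G) :
  distk 1 x z = if z == x then 0 else if adj x z then 1 else 2.
Proof.
have h0 := distP cG x z 0; have h1 := distP cG x z 1.
rewrite ball1 in h1; rewrite /= in_set1 in h0.
rewrite /distk; move: h0 h1; case: eqP => _ /=; case: (adj x z);
  case: (dist x z) => [|[|d]] //=.
Qed.

Lemma star_connected (G : graph) (c : vert G) :
  (forall y, y != c -> adj c y) -> connected G.
Proof.
move=> hc x y; exists 2.
have cx : c \in ball 1 x.
  rewrite ball1; case: (eqVneq c x) => //= ne; by rewrite adj_sym hc // eq_sym.
have [->|ne] := eqVneq y c.
  exact: (subsetP (ball_mono x (leqnSn 1))).
change (y \in ball 1 x :|: [set y0 | [exists z in ball 1 x, adj z y0]]).
by rewrite inE; apply/orP; right; rewrite inE; apply/existsP; exists c; rewrite cx hc.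
Qed.

Lemma nat_min_spec (P : nat -> Prop) : (exists n, P n) ->
  P (nat_min P) /\ forall n, P n -> nat_min P <= n.
Proof.
move=> ex; rewrite /nat_min; case: pselect => // h.
case: ex_minnP => m /asboolP Pm Hmin; split => // n Pn; apply: Hmin; exact/asboolP.
Qed.

Unset Implicit Arguments.
Definition V (k : nat) : finType := option ('I_k + {set 'I_k})%type.

Definition adjG k : rel (V k) := fun a b =>
  match a, b with
  | None, None => false
  | None, Some _ => true
  | Some _, None => true
  | Some (inl i), Some (inr A) => i \in A
  | Some (inr A), Some (inl i) => i \in A
  | _, _ => false
  end.

Lemma adjG_sym k : symmetric (adjG k).
Proof. by case=> [[i|A]|] [[j|B]|]. Qed.

Lemma adjG_irr k : irreflexive (adjG k).
Proof. by case=> [[i|A]|]. Qed.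

Definition adjH k : rel (V k) := fun a b => (a == None) (+) (b == None).

Lemma adjH_sym k : symmetric (adjH k).
Proof. by move=> a b; rewrite /adjH addbC. Qed.

Lemma adjH_irr k : irreflexive (adjH k).
Proof. by move=> a; rewrite /adjH addbb. Qed.

Definition Gr k := @Graph (V k) (adjG k) (adjG_sym k) (adjG_irr k).
Definition Hr k := @Graph (V k) (adjH k) (adjH_sym k) (adjH_irr k).

Lemma Gr_conn k : connected (Gr k).
Proof. apply: (@star_connected (Gr k) None); by case. Qed.

Lemma Hr_conn k : connected (Hr k).
Proof. apply: (@star_connected (Hr k) None); by case. Qed.

Lemma twins_H k (u v z : V k) : u != None -> v != None -> z != u -> z != v ->
  dist (G:=Hr k) u z = dist (G:=Hr k) v z.
Proof.
move=> uN vN zu zv.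
pose s := fun w : V k => if w == u then v else if w == v then u else w.
have sK : involutive s.
  move=> w; rewrite /s.
  have [->|wu] := eqVneq w u; first by rewrite eqxx; case: (eqVneq v u) => [->|_]; rewrite ?eqxx.
  have [->|wv] := eqVneq w v; first by rewrite eqxx.
  by rewrite (negbTE wu) (negbTE wv).
have sN : forall w, (s w == None) = (w == None).
  move=> w; rewrite /s.
  have [->|wu] := eqVneq w u; first by rewrite (negbTE uN) (negbTE vN).
  have [->|wv] := eqVneq w v; first by rewrite (negbTE uN) (negbTE vN).
  by [].
have sA : forall a b, adj (g:=Hr k) (s a) (s b) = adj (g:=Hr k) a b.
  by move=> a b; rewrite /= /adjH !sN.
by rewrite -(dist_auto (Hr_conn k) sK sA) /s eqxx (negbTE zu) (negbTE zv).
Qed.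

Set Implicit Arguments.

Lemma leaves_bound k (S : {set V k}) :
  (forall u v : V k, u != None -> v != None -> u != v -> u \notin S -> v \notin S -> False) ->
  #|V k| <= #|S| + 2.
Proof.
move=> P.
have h1 : #|~: S :\ None| <= 1.
  rewrite leqNgt; apply/negP => /card_gt1P [u [v [hu hv uv]]].
  move: hu hv; rewrite !inE => /andP [uN uS] /andP [vN vS].
  exact: (P u v uN vN uv uS vS).
have := cardsC S; have := cardsD1 None (~: S).
move: (None \in ~: S) => b; case: b => /= a1 a2; rewrite -a2 a1 leq_add2l ?add1n ?add0n ?ltnS //; exact: leq_trans h1 _.
Qed.

Lemma dist0 (G : graph) (cG : connected G) (x z : vert G) : (dist x z == 0) = (z == x).
Proof. by rewrite -leqn0 (distP cG) /= in_set1. Qed.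

Lemma resolvingT (G : graph) (cG : connected G) : resolving (G:=G) setT.
Proof.
move=> x y xy; exists x; rewrite ?inE // => h.
have e : dist x x == 0 by rewrite dist0.
by rewrite h dist0 // in e; apply: xy; apply/eqP.
Qed.

Lemma H_mdim k : #|V k| <= mdim (Hr k) + 2.
Proof.
have [[S [rS cS]] _] := @nat_min_spec (fun n => exists S : {set vert (Hr k)}, resolving S /\ #|S| = n)
  (ex_intro _ _ (ex_intro _ setT (conj (resolvingT (Hr_conn k)) erefl))).
rewrite /mdim -cS.
apply: (@leaves_bound k S) => u v uN vN uv uS vS.
have [z zS hz] := rS u v (elimN eqP uv).
apply: hz; apply: twins_H => //.
  by apply: contraNneq uS => <-.
by apply: contraNneq vS => <-.
Qed.

Lemma adj_resolvingT (G : graph) (cG : connected G) : adj_resolving (G:=G) setT.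
Proof.
move=> x y xy; exists x; rewrite ?inE // !distk1 // eqxx.
have -> : (x == y) = false by apply/eqP => e; apply: xy.
by case: adj.
Qed.

Lemma broadcastT (G : graph) (cG : connected G) : resolving_broadcast (G:=G) (fun _ => 1).
Proof.
move=> x y xy; have [z _ hz] := adj_resolvingT cG xy; by exists z.
Qed.

Lemma H_adim k : #|V k| <= adim (Hr k) + 2.
Proof.
have [[S [rS cS]] _] := @nat_min_spec (fun n => exists S : {set vert (Hr k)}, adj_resolving S /\ #|S| = n)
  (ex_intro _ _ (ex_intro _ setT (conj (adj_resolvingT (Hr_conn k)) erefl))).
rewrite /adim -cS.
apply: (@leaves_bound k S) => u v uN vN uv uS vS.
have [z zS hz] := rS u v (elimN eqP uv).
apply: hz; rewrite /distk; congr minn; apply: twins_H => //.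
  by apply: contraNneq uS => <-.
by apply: contraNneq vS => <-.
Qed.

Lemma H_bdim k : #|V k| <= bdim (Hr k) + 2.
Proof.
have [[f [rf cf]] _] := @nat_min_spec (fun n => exists f : vert (Hr k) -> nat,
    resolving_broadcast f /\ \sum_(v : vert (Hr k)) f v = n)
  (ex_intro _ _ (ex_intro _ (fun _ => 1) (conj (broadcastT (Hr_conn k)) erefl))).
rewrite /bdim -cf.
have le : #|[set v : V k | 0 < f v]| <= \sum_(v : vert (Hr k)) f v.
  rewrite -sum1_card big_mkcond /=; apply: leq_sum => v _; rewrite inE.
  by case: (f v).
apply: leq_trans (leq_add le (leqnn 2)).
apply: (@leaves_bound k) => u v uN vN uv uS vS.
have [z [zS hz]] := rf u v (elimN eqP uv).
apply: hz; rewrite /distk; congr minn; apply: twins_H => //.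
  by apply: contraNneq uS => <-; rewrite inE.
by apply: contraNneq vS => <-; rewrite inE.
Qed.

Definition Aset k : {set V k} := None |: [set (Some (inl i) : V k) | i : 'I_k].

Lemma Aset_card k : #|Aset k| <= k.+1.
Proof.
rewrite /Aset cardsU1 -add1n; apply: leq_add; first exact: leq_b1.
apply: leq_trans (leq_imset_card _ _) _.
by rewrite card_ord.
Qed.

Lemma A_res k : adj_resolving (G:=Gr k) (Aset k).
Proof.
have cG := Gr_conn k.
move=> x y xy.
have [xA|xA] := boolP (x \in Aset k).
  exists x => //; rewrite !distk1 // eqxx.
  have -> : (x == y) = false by apply/eqP => e; apply: xy.
  by case: adj.
have [yA|yA] := boolP (y \in Aset k).
  exists y => //; rewrite !distk1 // eqxx.
  have -> : (y == x) = false by apply/eqP => e; apply: xy.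
  by case: adj.
move: x y xy xA yA => [[i|S]|] [[j|T]|] // xy xA yA.
all: try by case/negP: xA; rewrite !inE //; apply/orP; right; apply/imsetP; eexists.
all: try by case/negP: yA; rewrite !inE //; apply/orP; right; apply/imsetP; eexists.
have : [exists i, (i \in S) != (i \in T)].
    have [//|/existsPn h] := boolP [exists i, (i \in S) != (i \in T)].
    exfalso; apply: xy.
    by congr (Some (inr _)); apply/setP => i; have := h i; rewrite negbK => /eqP.
  case/existsP => i hi; exists (Some (inl i)).
    by rewrite inE; apply/orP; right; apply/imsetP; exists i.
  rewrite !distk1 //=.
  by move: hi; case: (i \in S); case: (i \in T).
Qed.

Lemma None_neq k : (None : V k) <> Some (inr set0).
Proof. by []. Qed.

Lemma G_adim k : 0 < adim (Gr k) <= k.+1.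
Proof.
have [[S [rS cS]] mn] := @nat_min_spec (fun n => exists S : {set vert (Gr k)}, adj_resolving S /\ #|S| = n)
  (ex_intro _ _ (ex_intro _ (Aset k) (conj (@A_res k) erefl))).
rewrite /adim; apply/andP; split.
  rewrite -cS; have [z zS _] := rS _ _ (@None_neq k); apply/card_gt0P; by exists z.
apply: leq_trans (@Aset_card k); apply: mn; by exists (Aset k); split => //; exact: A_res.
Qed.

Lemma A_res' k : resolving (G:=Gr k) (Aset k).
Proof.
move=> x y xy; have [z zS hz] := A_res xy; exists z => // e; apply: hz.
by rewrite /distk e.
Qed.

Lemma G_mdim k : 0 < mdim (Gr k) <= k.+1.
Proof.
have [[S [rS cS]] mn] := @nat_min_spec (fun n => exists S : {set vert (Gr k)}, resolving S /\ #|S| = n)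
  (ex_intro _ _ (ex_intro _ (Aset k) (conj (@A_res' k) erefl))).
rewrite /mdim; apply/andP; split.
  rewrite -cS; have [z zS _] := rS _ _ (@None_neq k); apply/card_gt0P; by exists z.
apply: leq_trans (@Aset_card k); apply: mn; by exists (Aset k); split => //; exact: A_res'.
Qed.

Definition fA k : V k -> nat := fun v => v \in Aset k.

Lemma fA_sum k : \sum_(v : V k) fA v = #|Aset k|.
Proof. by rewrite -sum1_card [RHS]big_mkcond /=; apply: eq_bigr => v _; rewrite /fA; case: (v \in _). Qed.

Lemma fA_res k : resolving_broadcast (G:=Gr k) (@fA k).
Proof.
move=> x y xy; have [z zS hz] := A_res xy; exists z.
by rewrite /fA zS.
Qed.

Lemma G_bdim k : 0 < bdim (Gr k) <= k.+1.
Proof.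
have [[f [rf cf]] mn] := @nat_min_spec (fun n => exists f : vert (Gr k) -> nat,
    resolving_broadcast f /\ \sum_(v : vert (Gr k)) f v = n)
  (ex_intro _ _ (ex_intro _ (@fA k) (conj (@fA_res k) erefl))).
rewrite /bdim; apply/andP; split.
  rewrite -cf; have [z [fz _]] := rf _ _ (@None_neq k).
  by rewrite (bigD1 z) //=; apply: leq_trans fz (leq_addr _ _).
apply: leq_trans (@Aset_card k); rewrite -(@fA_sum k); apply: mn.
by exists (@fA k); split => //; exact: fA_res.
Qed.

Lemma cardV k : k + expn 2 k < #|V k|.
Proof.
rewrite card_option card_sum card_ord ltnS leq_add2l.
have := subset_leq_card (subsetT (powerset [set: 'I_k])).
rewrite card_powerset cardsT card_ord cardsT. move=> h; exact h.
Qed.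

Lemma arith N m a b : m = 3 * N + 1 -> m < expn 2 m ->
  (m + m) + expn 2 (m + m) < a + 2 -> 0 < b <= (m + m).+1 -> N * b < a.
Proof.
move=> hm hp ha /andP [b0 hb].
move: ha; rewrite expnD; move: hp; set p := expn 2 m => hp ha.
have : N * b <= N * (m + m).+1 by rewrite leq_mul2l hb orbT.
nia.
Qed.

Lemma ratio_gt (M : R) N a b : (M < INR N)%R -> 0 < b -> N * b < a ->
  (INR a / INR b > M)%R.
Proof.
move=> hM hb hab.
have hb' : (0 < INR b)%R by apply: lt_0_INR; apply/ltP.
have h : (INR N * INR b < INR a)%R.
  rewrite -mult_INR; apply: lt_INR; exact/ltP.
apply: Rlt_gt; apply: Rlt_trans hM _.
apply: (Rmult_lt_reg_r (INR b)) => //.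
rewrite /Rdiv Rmult_assoc Rinv_l; lra.
Qed.

Open Scope R_scope.

Theorem theorem5p7 : forall M : R, 0 < M ->
  exists G H : graph, connected G /\ connected H /\ subgraph H G /\
    INR (mdim H) / INR (mdim G) > M /\
    INR (bdim H) / INR (bdim G) > M /\
    INR (adim H) / INR (adim G) > M.
Proof.
move=> M _.
have [N hN] := INR_unbounded M.
pose m := (3 * N + 1)%nat.
have hp : (m < expn 2 m)%nat by apply: ltn_expl.
pose k := (m + m)%nat.
have hV := cardV k.
exists (Gr k), (Hr k); split; first exact: Gr_conn.
split; first exact: Hr_conn.
split.
  exists (fun x : V k => x); split => // u v; rewrite /= /adjH /adjG.
  by case: u => [[i|A]|]; case: v => [[j|B]|].
have HM := H_mdim k; have HA := H_adim k; have HB := H_bdim k.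
have GM := G_mdim k; have GA := G_adim k; have GB := G_bdim k.
split; last split.
- apply: ratio_gt hN _ _; first by case/andP: GM.
  apply: (arith (m:=m)) => //; exact: leq_trans hV HM.
- apply: ratio_gt hN _ _; first by case/andP: GB.
  apply: (arith (m:=m)) => //; exact: leq_trans hV HB.
- apply: ratio_gt hN _ _; first by case/andP: GA.
  apply: (arith (m:=m)) => //; exact: leq_trans hV HA.
Qed.
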